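(* Let $N=pq$ with $p,q$ distinct primes. Let $d\in\mathbb{N}$ and $b_1,\dots,b_d\in\mathbb{Z}$. For each $i$ let $f_i=n_{2,i}X^2+n_{1,i}X+n_{0,i}\in\mathbb{Z}[X]$ be a polynomial of degree $2$ with $f_i(b_i)=N$. Suppose $\gcd(n_{2,i}b_i,N)=1$ for every $i$, and define $b_{d+i}:=n_{0,i}\cdot n_{2,i}^{-1}\cdot b_i^{-1}\bmod N$ for $1\le i\le d$ (inverses taken modulo $N$). If $\gcd(b_j-b_k,N)=1$ for all $j,k\in\{1,\dots,2d\}$ with $j\neq k$, then \[\nu\Big(\prod_{i=1}^d f_i\Big)=2dp+2dq-8d^2.\]
   Context: $Z_N=\{0,1,\dots,N-1\}$. For $g\in\mathbb{Z}[X]$, an element $x\in Z_N$ is called suitable for $g$ if $1<\gcd(g(x),N)<N$, and $\nu(g)$ denotes the number of $x\in Z_N$ suitable for $g$. *)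

(* Defs.v *)
From mathcomp Require Import all_boot all_order all_algebra.
Set Implicit Arguments. Unset Strict Implicit. Unset Printing Implicit Defensive.
Import Order.TTheory GRing.Theory Num.Theory.
Local Open Scope ring_scope.

(* Z_N = {0,...,N-1} is represented by 'I_N (ordinals, coerced to nat). *)

Definition suitable (N : nat) (g : {poly int}) (x : nat) : bool :=
  (1 < gcdz g.[x%:Z] N%:Z < N%:Z).

Definition nu (N : nat) (g : {poly int}) : nat :=
  #|[pred x : 'I_N | suitable N g x]|.

(* Inverse of a modulo m (meaningful when a is coprime to m):
   the Bezout coefficient u with u*a + v*m = gcd(a,m) = 1, reduced mod m. *)
Definition invmodz (a m : int) : int := ((egcdz a m).1 %% m)%Z.

Definition bsecond (N : nat) (f : nat -> {poly int}) (b : nat -> int) (i : nat) : int :=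
  (((f i)`_0 * invmodz (f i)`_2 N%:Z * invmodz (b i) N%:Z) %% N%:Z)%Z.

(* the extended family b_1..b_{2d}, indexed from 0 to 2d-1 *)
Definition bext (N d : nat) (f : nat -> {poly int}) (b : nat -> int) (j : nat) : int :=
  if (j < d)%N then b j else bsecond N f b (j - d).

(* Main.v *)
Require Import Defs.
From mathcomp Require Import all_boot all_order all_algebra.
From mathcomp Require Import ring zify.
Set Implicit Arguments. Unset Strict Implicit. Unset Printing Implicit Defensive.
Import Order.TTheory GRing.Theory Num.Theory.

Lemma suit_nat (p q A : nat) : prime p -> prime q -> p != q ->
  ((1 < gcdn A (p*q) < p*q)%N) = ((p %| A) != (q %| A)).
Proof.
move=> pp pq npq.
have cpq : coprime p q by rewrite prime_coprime // dvdn_prime2.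
have p1 := prime_gt1 pp; have q1 := prime_gt1 pq.
have N0 : (0 < p * q)%N by rewrite muln_gt0 !prime_gt0.
have g0 : (0 < gcdn A (p*q))%N by rewrite gcdn_gt0 N0 orbT.
have gN : (gcdn A (p*q) <= p*q)%N by apply: dvdn_leq => //; apply: dvdn_gcdr.
have E1 : (1 < gcdn A (p*q))%N = (p %| A) || (q %| A).
  apply/idP/idP.
  - move=> g1; have := pdiv_dvd (gcdn A (p*q)); have ppd := pdiv_prime g1.
    move=> hd; have := dvdn_trans hd (dvdn_gcdr A (p*q)).
    rewrite Euclid_dvdM // (dvdn_prime2 ppd pp) (dvdn_prime2 ppd pq).
    have hA := dvdn_trans hd (dvdn_gcdl A (p*q)).
    by case/orP => /eqP e; move: hA; rewrite e => ->; rewrite ?orbT.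
  - case/orP => h.
      have : (p %| gcdn A (p*q))%N by rewrite dvdn_gcd h dvdn_mulr.
      by move/(dvdn_leq g0); apply: leq_trans.
    have : (q %| gcdn A (p*q))%N by rewrite dvdn_gcd h dvdn_mull.
    by move/(dvdn_leq g0); apply: leq_trans.
have E2 : (gcdn A (p*q) < p*q)%N = ~~ ((p %| A) && (q %| A)).
  rewrite -Gauss_dvd // ltn_neqAle gN andbT; congr negb.
  apply/eqP/idP => [<-|h]; first exact: dvdn_gcdl.
  by apply/eqP; rewrite eqn_dvd dvdn_gcdr dvdn_gcd h dvdnn.
by rewrite E1 E2; case: (p %| A); case: (q %| A).
Qed.

Local Open Scope ring_scope.

Lemma suit_int (p q : nat) (a : int) : prime p -> prime q -> p != q ->
  (1 < gcdz a (p*q)%N%:Z < (p*q)%N%:Z) = ((p%:Z %| a)%Z != (q%:Z %| a)%Z).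
Proof.
move=> pp pq npq; rewrite /gcdz /dvdz /= -(suit_nat `|a| pp pq npq).
by rewrite !ltz_nat.
Qed.


Lemma card_sum (I : finType) (A : pred I) : #|[pred i | A i]| = (\sum_i (A i : nat))%N.
Proof.
rewrite -sum1_card big_mkcond /=; apply: eq_bigr => i _; rewrite inE; by case: (A i).
Qed.

Lemma count_crt (p q : nat) (A B : nat -> bool) : (0 < p)%N -> (0 < q)%N -> coprime p q ->
  (forall x, A x = A (x %% p)%N) -> (forall x, B x = B (x %% q)%N) ->
  (#|[pred x : 'I_(p*q) | A x != B x]|)%:Z =
   (#|[pred i : 'I_p | A i]|)%:Z * q%:Z + p%:Z * (#|[pred j : 'I_q | B j]|)%:Z
   - 2 * (#|[pred i : 'I_p | A i]|)%:Z * (#|[pred j : 'I_q | B j]|)%:Z.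
Proof.
move=> p0 q0 cpq HA HB.
pose phi (x : 'I_(p*q)) : 'I_p * 'I_q := (Ordinal (ltn_pmod x p0), Ordinal (ltn_pmod x q0)).
have phi_inj : injective phi.
  move=> x y /= [] hp hq; apply/val_inj => /=.
  have := chinese_remainder cpq x y; rewrite /= hp hq !eqxx /=.
  by rewrite !modn_small // => /eqP.
have phi_bij : bijective phi by apply: inj_card_bij => //; rewrite card_prod !card_ord.
case: phi_bij => psi phipsi psiphi.
have psi_bij : bijective psi by exists phi.
have H1 u : (psi u %% p)%N = u.1 by rewrite -[in RHS](psiphi u).
have H2 u : (psi u %% q)%N = u.2 by rewrite -[in RHS](psiphi u).
rewrite card_sum (reindex psi) /=; last by apply: onW_bij.
under eq_bigr => u _ do rewrite HA HB H1 H2.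
rewrite -(pair_big xpredT xpredT (fun i j => ((A (val i) != B (val j)) : nat))) /=.
rewrite !card_sum -!natz !natr_sum.
transitivity (\sum_(i : 'I_p) \sum_(j : 'I_q) (((A i : nat)%:R : int) + (B j : nat)%:R - 2 * (A i : nat)%:R * (B j : nat)%:R)).
  apply: eq_bigr => i _; rewrite natr_sum; apply: eq_bigr => j _.
  by case: (A i); case: (B j).
have E (a : int) : \sum_(j < q) (a + (B j : nat)%:R - 2 * a * (B j : nat)%:R) = a * q%:R + \sum_(j < q) ((B j : nat)%:R : int) - 2 * a * \sum_(j < q) ((B j : nat)%:R : int).
  rewrite sumrB big_split /= sumr_const card_ord -mulr_sumr -mulr_natr; ring.
rewrite (eq_bigr (fun i : 'I_p => ((A i : nat)%:R : int) * q%:R + \sum_(j < q) ((B j : nat)%:R : int) - 2 * (A i : nat)%:R * \sum_(j < q) ((B j : nat)%:R : int))); last by move=> i _; exact: E.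
rewrite sumrB big_split /= -!mulr_suml sumr_const card_ord.
rewrite -mulr_sumr -mulr_natl; ring.
Qed.


Section F.
Variable r : nat.
Hypothesis pr : prime r.
Local Notation F := 'F_r.

Lemma dvdF (z : int) : (r%:Z %| z)%Z = (z%:~R == 0 :> F).
Proof. exact: dvdz_pcharf (pchar_Fp pr) z. Qed.

Lemma modF (N : nat) (z : int) : (r %| N)%N -> ((z %% N%:Z)%Z%:~R : F) = z%:~R.
Proof.
move=> rN; have -> : (z %% N%:Z)%Z = z - (z %/ N%:Z)%Z * N%:Z by [].
rewrite intrB intrM.
have : ((N%:Z)%:~R : F) == 0 by rewrite -dvdF.
by move/eqP => ->; rewrite mulr0 subr0.
Qed.

Lemma copF (N : nat) (z : int) : (r %| N)%N -> coprimez z N%:Z -> (z%:~R : F) != 0.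
Proof.
move=> rN cz; rewrite -dvdF; apply/negP => rz.
have : (r%:Z %| gcdz z N%:Z)%Z by rewrite dvdz_gcd rz.
by move: cz; rewrite /coprimez => /eqP ->; rewrite dvdz1 /= => /eqP r1; move: pr; rewrite r1.
Qed.

Lemma invF (N : nat) (z : int) : (r %| N)%N -> coprimez z N%:Z ->
  ((invmodz z N%:Z)%:~R : F) * z%:~R = 1.
Proof.
move=> rN cz; rewrite /invmodz modF //.
case: egcdzP => u v /= Huv _.
move: cz; rewrite /coprimez => /eqP c1; rewrite c1 in Huv.
have := congr1 (fun t : int => (t%:~R : F)) Huv; rewrite /= intrD !intrM.
have : ((N%:Z)%:~R : F) == 0 by rewrite -dvdF.
by move/eqP => ->; rewrite mulr0 addr0.
Qed.


Lemma horner3 (g : {poly int}) (x : int) : size g = 3%N ->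
  g.[x] = g`_0 + g`_1 * x + g`_2 * x ^+ 2.
Proof.
move=> sz; rewrite horner_coef sz !big_ord_recl big_ord0 /=.
by rewrite /bump /= expr0 expr1 mulr1 addr0 addrA.
Qed.

Lemma quadF (N : nat) (g : {poly int}) (b0 x : int) : (r %| N)%N ->
  size g = 3%N -> g.[b0] = N%:Z -> coprimez (g`_2 * b0) N%:Z ->
  (r%:Z %| g.[x])%Z =
   ((x%:~R : F) == b0%:~R) ||
   ((x%:~R : F) == ((g`_0 * invmodz g`_2 N%:Z * invmodz b0 N%:Z) %% N%:Z)%Z%:~R).
Proof.
move=> rN sz gb cop.
have c2 : coprimez g`_2 N%:Z by move: cop; rewrite coprimezMl => /andP[].
have cb : coprimez b0 N%:Z by move: cop; rewrite coprimezMl => /andP[].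
have N2 := copF rN c2; have B0 := copF rN cb.
have U2 := invF rN c2; have Ub := invF rN cb.
have hN : ((N%:Z)%:~R : F) = 0 by apply/eqP; rewrite -dvdF.
have e0 : ((g`_0)%:~R : F) + (g`_1)%:~R * b0%:~R + (g`_2)%:~R * b0%:~R ^+ 2 = 0.
  by have := congr1 (fun t : int => (t%:~R : F)) gb; rewrite /= hN horner3 // !expr2 intrD intrD !intrM.
rewrite dvdF modF // !intrM horner3 // !expr2 intrD intrD !intrM -!expr2.
move: (invmodz g`_2 N%:Z) (invmodz b0 N%:Z) U2 Ub => u2 ub U2 Ub.
set n0 := ((g`_0)%:~R : F) in e0 *; set n1 := ((g`_1)%:~R : F) in e0 *.
set n2 := ((g`_2)%:~R : F) in e0 N2 U2 *; set B := (b0%:~R : F) in e0 B0 Ub *.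
set X := (x%:~R : F).
have -> : (u2%:~R : F) = n2^-1 by apply: (mulIf N2); rewrite U2 mulVf.
have -> : (ub%:~R : F) = B^-1 by apply: (mulIf B0); rewrite Ub mulVf.
have -> : n0 = - n1 * B - n2 * B ^+ 2 by apply/eqP; rewrite -subr_eq0 -e0; apply/eqP; ring.
have -> : (- n1 * B - n2 * B ^+ 2) + n1 * X + n2 * X ^+ 2 =
   n2 * ((X - B) * (X - (- n1 * B - n2 * B ^+ 2) * n2^-1 * B^-1)).
  by field; rewrite N2 B0.
by rewrite !mulf_eq0 (negbTE N2) /= !subr_eq0.
Qed.

End F.

Lemma modr_lt (r : nat) (a : int) : (0 < r)%N -> (`|(a %% r%:Z)%Z| < r)%N.
Proof.
move=> r0; have r0' : (0 < r%:Z) by rewrite ltz_nat.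
have := ltz_pmod a r0'; rewrite -(gez0_abs (modz_ge0 a _)) ?ltz_nat //.
by rewrite -lt0n.
Qed.

Lemma modr_abs (r : nat) (a : int) : (0 < r)%N -> (a %% r%:Z)%Z = `|(a %% r%:Z)%Z|%N%:Z.
Proof. by move=> r0; rewrite gez0_abs // modz_ge0 // -lt0n. Qed.

Lemma eqF_mod (r : nat) (i : nat) (a : int) : prime r -> (i < r)%N ->
  (((i%:Z)%:~R : 'F_r) == a%:~R) = (i == `|(a %% r%:Z)%Z|%N).
Proof.
move=> pr ir; have r0 := prime_gt0 pr.
rewrite -subr_eq0 -intrB -(dvdF pr) -eqz_mod_dvd modz_small; last by rewrite ltz_nat ir andbT.
by rewrite (modr_abs a r0) eqz_nat.
Qed.

Section Main.
Variables (p q d : nat) (b : nat -> int) (f : nat -> {poly int}).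
Hypotheses (pp : prime p) (pq : prime q) (npq : p != q).
Hypothesis sz : forall i, (i < d)%N -> size (f i) = 3%N.
Hypothesis fb : forall i, (i < d)%N -> (f i).[b i] = (p * q)%N%:Z.
Hypothesis cop : forall i, (i < d)%N -> coprimez ((f i)`_2 * b i) (p * q)%N%:Z.
Hypothesis dist : forall j k, (j < 2 * d)%N -> (k < 2 * d)%N -> j != k ->
     coprimez (bext (p * q) d f b j - bext (p * q) d f b k) (p * q)%N%:Z.

Local Notation N := (p * q)%N.
Local Notation g := (\prod_(i < d) f i).

Definition Rt (r : nat) (x : int) : bool :=
  [exists j : 'I_(2 * d), ((x%:~R : 'F_r) == (bext N d f b j)%:~R)].

Lemma key (r : nat) (x : int) : prime r -> (r %| N)%N ->
  (r%:Z %| g.[x])%Z = Rt r x.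
Proof.
move=> pr rN; rewrite (dvdF pr) horner_prod rmorph_prod /=.
apply/prodf_eq0/existsP => [[i _]|[j]].
  rewrite -(dvdF pr) (quadF pr x rN (sz (ltn_ord i)) (fb (ltn_ord i)) (cop (ltn_ord i))).
  case/orP => h.
    have ji : (i < 2 * d)%N by rewrite (leq_trans (ltn_ord i)) // leq_pmull.
    by exists (Ordinal ji); rewrite /bext /= ltn_ord.
  have ji : (d + i < 2 * d)%N by rewrite mul2n -addnn ltn_add2l.
  exists (Ordinal ji); rewrite /bext /= ltnNge leq_addr /= addKn.
  by rewrite /bsecond.
rewrite /bext; case: ifP => hj h.
  exists (Ordinal hj) => //; rewrite -(dvdF pr).
  by rewrite (quadF pr x rN (sz hj) (fb hj) (cop hj)) h.
have hi : (j - d < d)%N.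
  by rewrite ltn_subLR ?addnn -?mul2n ?ltn_ord // leqNgt hj.
exists (Ordinal hi) => //; rewrite -(dvdF pr).
by rewrite (quadF pr x rN (sz hi) (fb hi) (cop hi)) /= -/(bsecond N f b (j - d)) h orbT.
Qed.

Lemma Rt_mod (r x : nat) : prime r -> Rt r (x%:Z) = Rt r ((x %% r)%N%:Z).
Proof.
move=> pr; rewrite /Rt -modz_nat (modF pr x (dvdnn r)) //.
Qed.

Lemma card_Rt (r : nat) : prime r -> (r %| N)%N ->
  #|[pred i : 'I_r | Rt r (i : nat)%:Z]| = (2 * d)%N.
Proof.
move=> pr rN; have r0 := prime_gt0 pr.
pose h (j : 'I_(2 * d)) : 'I_r := Ordinal (modr_lt (bext N d f b j) r0).
have hinj : injective h.
  move=> j k /(congr1 val) /= e; apply/eqP; apply: contraT => njk.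
  have := copF pr rN (dist (ltn_ord j) (ltn_ord k) njk).
  rewrite -(dvdF pr) -eqz_mod_dvd (modr_abs (bext N d f b j) r0) (modr_abs (bext N d f b k) r0) e.
  by rewrite eqxx.
rewrite -[RHS](card_ord (2 * d)) -(card_codom hinj); apply: eq_card => i.
rewrite inE /Rt; apply/existsP/codomP => [[j]|[j ->]].
  by rewrite (eqF_mod _ pr (ltn_ord i)) => /eqP e; exists j; apply: val_inj.
by exists j; rewrite (eqF_mod _ pr (ltn_ord _)).
Qed.

Lemma main_eq : (nu N g)%:Z = (2 * d * p + 2 * d * q)%N%:Z - (8 * d ^ 2)%N%:Z.
Proof.
have cpq : coprime p q by rewrite prime_coprime // dvdn_prime2.
have pN : (p %| N)%N by rewrite dvdn_mulr.
have qN : (q %| N)%N by rewrite dvdn_mull.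
rewrite /nu.
have E : [pred x : 'I_N | suitable N g x] =i [pred x : 'I_N | Rt p (x : nat)%:Z != Rt q (x : nat)%:Z].
  by move=> x; rewrite !inE /suitable suit_int // (key _ pp pN) (key _ pq qN).
rewrite (eq_card E).
rewrite (count_crt (A := fun x : nat => Rt p x%:Z) (B := fun x : nat => Rt q x%:Z)) ?prime_gt0 //; 
  last by move=> x; apply: Rt_mod.
  2: by move=> x; apply: Rt_mod.
rewrite (card_Rt pp pN) (card_Rt pq qN).
rewrite !PoszD !PoszM; ring.
Qed.

End Main.

Theorem theorem2p11 (p q : nat) (d : nat) (b : nat -> int) (f : nat -> {poly int}) :
  prime p -> prime q -> p != q ->
  (forall i, (i < d)%N -> size (f i) = 3%N) ->
  (forall i, (i < d)%N -> (f i).[b i] = (p * q)%N%:Z) ->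
  (forall i, (i < d)%N -> coprimez ((f i)`_2 * b i) (p * q)%N%:Z) ->
  (forall j k, (j < 2 * d)%N -> (k < 2 * d)%N -> j != k ->
     coprimez (bext (p * q) d f b j - bext (p * q) d f b k) (p * q)%N%:Z) ->
  (nu (p * q) (\prod_(i < d) f i))%:Z
    = (2 * d * p + 2 * d * q)%N%:Z - (8 * d ^ 2)%N%:Z.
Proof.
move=> pp pq npq sz fb cop dist.
exact: (main_eq pp pq npq sz fb cop dist).
Qed.
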